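(* Let $\boldsymbol{B}\in\mathbb{R}^{d\times d}$ be a fixed positive definite matrix with eigenvalues $\beta_1,\dots,\beta_d\ge0$, and let $c$ be a positive constant with $c\le\operatorname{tr}(\boldsymbol{B})$. Over positive definite matrices $\boldsymbol{G}\in\mathbb{R}^{d\times d}$ with $\operatorname{tr}(\boldsymbol{G})=c$, the minimum of $\operatorname{tr}(\boldsymbol{G}^{-1}\boldsymbol{B})+\ln\det(\boldsymbol{G})$ is achieved at $\boldsymbol{G}=\boldsymbol{O}^\top\operatorname{Diag}(\alpha_1^*,\dots,\alpha_d^* )\boldsymbol{O}$, where $\boldsymbol{O}$ is any orthogonal matrix with $\boldsymbol{B}=\boldsymbol{O}^\top\operatorname{Diag}(\beta_1,\dots,\beta_d)\boldsymbol{O}$, $$\alpha_i^*=\frac{\sqrt{1-4\lambda^*\beta_i}-1}{-2\lambda^*},$$ and $\lambda^*\le0$ is the unique solution of $\sum_{i=1}^d\frac{2\beta_i}{1+\sqrt{1-4\lambda^*\beta_i}}=c$. *)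

(* Defs.v *)
From HB Require Import structures.
From mathcomp Require Import all_boot all_order all_algebra.
From mathcomp Require Import all_classical all_reals exp.
Set Implicit Arguments. Unset Strict Implicit. Unset Printing Implicit Defensive.
Import Order.TTheory GRing.Theory Num.Theory.
Local Open Scope ring_scope.

Definition posdef (R : realType) (d : nat) (A : 'M[R]_d) : Prop :=
  A^T = A /\ forall x : 'rV[R]_d, x != 0 -> 0 < (x *m A *m x^T) 0 0.

Definition orthogonal_mx (R : realType) (d : nat) (O : 'M[R]_d) : Prop :=
  O *m O^T = 1%:M /\ O^T *m O = 1%:M.

Definition objective (R : realType) (d : nat) (B G : 'M[R]_d) : R :=
  \tr (invmx G *m B) + ln (\det G).

Definition lam_eq_lhs (R : realType) (d : nat) (beta : 'rV[R]_d) (lam : R) : R :=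
  \sum_(i < d) (2 * beta 0 i) / (1 + Num.sqrt (1 - 4 * lam * beta 0 i)).

(* alpha_i^* = (sqrt(1 - 4 lam beta_i) - 1) / (-2 lam); at lam = 0 (the case
   c = tr B) the formula is 0/0 and we take its limit value beta_i. *)
Definition alpha_star (R : realType) (lam b : R) : R :=
  if lam == 0 then b else (Num.sqrt (1 - 4 * lam * b) - 1) / (- 2 * lam).

Definition Gstar (R : realType) (d : nat) (O : 'M[R]_d) (beta : 'rV[R]_d) (lam : R)
  : 'M[R]_d :=
  O^T *m diag_mx (\row_i alpha_star lam (beta 0 i)) *m O.

(* Main.v *)
Require Import Defs.
From HB Require Import structures.
From mathcomp Require Import all_boot all_order all_algebra.
From mathcomp Require Import all_classical all_reals exp.
From mathcomp Require Import topology normedtype realfun.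
From mathcomp Require Import ring lra.
Import Order.TTheory GRing.Theory Num.Theory.
Import numFieldNormedType.Exports.
Local Open Scope ring_scope.
Set Implicit Arguments. Unset Strict Implicit. Unset Printing Implicit Defensive.

Definition alf (R : realType) (lam b : R) := 2 * b / (1 + Num.sqrt (1 - 4 * lam * b)).

Lemma alf_props (R : realType) (lam b : R) : lam <= 0 -> 0 < b ->
  0 < alf lam b /\ lam * alf lam b ^+ 2 - alf lam b + b = 0 /\ alf lam b <= b.
Proof.
move=> l0 b0; rewrite /alf.
set s := Num.sqrt _.
have h1 : 1 <= 1 - 4 * lam * b by nra.
have s2 : s ^+ 2 = 1 - 4 * lam * b by rewrite sqr_sqrtr //; lra.
have s1 : 1 <= s by rewrite -sqrtr1 ler_sqrt //; lra.
have D0 : 0 < 1 + s by lra.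
split; first by apply: divr_gt0; lra.
split.
  have -> : lam * (2 * b / (1 + s)) ^+ 2 - 2 * b / (1 + s) + b =
     b * (4 * lam * b - 1 + s ^+ 2) / (1 + s) ^+ 2.
    by field; rewrite gt_eqF.
  have -> : 4 * lam * b - 1 + s ^+ 2 = 0 by rewrite s2; ring.
  by rewrite mulr0 mul0r.
rewrite ler_pdivrMr //; nra.
Qed.

Lemma scalar_min (R : realType) (lam b al a : R) : lam <= 0 -> 0 < b -> 0 < al ->
  lam * al ^+ 2 - al + b = 0 -> 0 < a ->
  b / al + ln al - lam * al <= b / a + ln a - lam * a.
Proof.
move=> l0 b0 al0 E a0.
have L : ln al - ln a <= al / a - 1.
  rewrite -ln_div ?posrE //.
  have := @le_ln1Dx R (al / a - 1); rewrite [1 + _]addrC subrK; apply.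
  have : 0 < al / a by exact: divr_gt0.
  lra.
set q := al / a.
have qa : q * a = al by rewrite /q divfK ?gt_eqF.
have bal : b / al = 1 - lam * al.
  apply: (@mulIf _ al); first by rewrite gt_eqF.
  rewrite divfK ?gt_eqF //; have -> : b = al - lam * al ^+ 2 by lra.
  ring.
have ba : b / a = q - lam * al * q.
  apply: (@mulIf _ a); first by rewrite gt_eqF.
  rewrite divfK ?gt_eqF //. 
  have -> : (q - lam * al * q) * a = (q * a) - lam * al * (q * a) by ring.
  rewrite qa; lra.
set t := al * q + a - 2 * al.
have at_ : a * t = (al - a) ^+ 2.
  rewrite /t; have -> : a * (al * q + a - 2 * al) = al * (q * a) + a * a - 2 * al * a by ring.
  rewrite qa; ring.
have t0 : 0 <= t.
  have : 0 <= a * t by rewrite at_ sqr_ge0.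
  by rewrite pmulr_rge0.
have lt0 : lam * t <= 0 by rewrite mulr_le0_ge0.
rewrite bal ba.
have : lam * t = lam * al * q + lam * a - 2 * (lam * al) by rewrite /t; ring.
rewrite -/q in L. lra.
Qed.

Lemma alf_cont (R : realType) (b : R) : continuous (fun l : R => alf l b).
Proof.
move=> x; rewrite /alf.
have c4 : {for x, continuous (fun l : R => 4 * l)}.
  have H := @continuousM R R (fun=> 4) (fun l : R => l) x (@cst_continuous _ _ _ x) cvg_id.
  exact: H.
have c4b : {for x, continuous (fun l : R => 4 * l * b)}.
  have H := @continuousM R R _ (fun=> b) x c4 (@cst_continuous _ _ _ x).
  exact: H.
have h1 : {for x, continuous (fun l : R => 1 - 4 * l * b)}.
  have H := @continuousB R R^o R (fun=> 1) _ x (@cst_continuous _ _ _ x) c4b.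
  exact: H.
have h2 : {for x, continuous (fun l : R => Num.sqrt (1 - 4 * l * b))}.
  exact: (continuous_comp h1 (@sqrt_continuous R _)).
have h3 : {for x, continuous (fun l : R => 1 + Num.sqrt (1 - 4 * l * b))}.
  have H := @continuousD R R^o R (fun=> 1) _ x (@cst_continuous _ _ _ x) h2.
  exact: H.
have h4 : {for x, continuous (fun l : R => (1 + Num.sqrt (1 - 4 * l * b))^-1)}.
  have H := @continuousV R R _ x _ h3.
  by apply: H; rewrite gt_eqF // ltr_pwDl ?sqrtr_ge0.
have H := @continuousM R R (fun=> 2 * b) _ x (@cst_continuous _ _ _ x) h4.
exact: H.
Qed.

Lemma sum_cont (R : realType) n (F : 'I_n -> R -> R) :
  (forall i, continuous (F i)) -> continuous (fun x => \sum_i F i x).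
Proof.
elim: n F => [|n IH] F Fc.
  under eq_fun do rewrite big_ord0; exact: cst_continuous.
under eq_fun do rewrite big_ord_recr /=.
move=> x; apply: continuousD; last exact: Fc.
by apply: IH => i; exact: Fc.
Qed.

Lemma alf0 (R : realType) (b : R) : alf 0 b = b.
Proof. by rewrite /alf mulr0 mul0r subr0 sqrtr1 mulrC -[1 + 1]/2 mulKf // pnatr_eq0. Qed.

Lemma alf_lt (R : realType) (l1 l2 b : R) : l1 < l2 -> l2 <= 0 -> 0 < b -> alf l1 b < alf l2 b.
Proof.
move=> l12 l20 b0; rewrite /alf ltr_pM2l ?mulr_gt0 // ltf_pV2 ?posrE.
- by rewrite ltrD2l ltr_sqrt; nra.
- by rewrite ltr_pwDl ?sqrtr_ge0.
- by rewrite ltr_pwDl ?sqrtr_ge0.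
Qed.

Lemma lhsE (R : realType) d (beta : 'rV[R]_d) l :
  lam_eq_lhs beta l = \sum_i alf l (beta 0 i).
Proof. by []. Qed.

Lemma lhs_lt (R : realType) d (beta : 'rV[R]_d) l1 l2 : (0 < d)%N ->
  (forall i, 0 < beta 0 i) -> l1 < l2 -> l2 <= 0 ->
  lam_eq_lhs beta l1 < lam_eq_lhs beta l2.
Proof.
move=> d0 bp l12 l20; rewrite !lhsE; apply: ltr_sum.
  by apply/hasP; exists (Ordinal d0); rewrite ?mem_index_enum.
by move=> i _; apply: alf_lt.
Qed.

Lemma le_beta (R : realType) d (beta : 'rV[R]_d) (i : 'I_d) :
  (forall i, 0 < beta 0 i) -> beta 0 i <= \sum_j beta 0 j.
Proof.
move=> bp; rewrite (bigD1 i) //= lerDl sumr_ge0 // => j _; exact: ltW.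
Qed.

Lemma lam_exists (R : realType) d (beta : 'rV[R]_d) (c : R) :
  (forall i, 0 < beta 0 i) -> 0 < c -> c <= \sum_i beta 0 i ->
  exists! lam : R, lam <= 0 /\ lam_eq_lhs beta lam = c.
Proof.
move=> bp c0 cT.
set T := \sum_i beta 0 i.
have d0 : (0 < d)%N.
  case: d beta bp T cT => // beta bp T; rewrite /T big_ord0 => cT.
  by move: (lt_le_trans c0 cT); rewrite ltxx.
have T0 : 0 < T := lt_le_trans c0 cT.
have dR : 0 < d%:R :> R by rewrite ltr0n.
set k := c / d%:R.
have k0 : 0 < k by exact: divr_gt0.
set M := T / k ^+ 2.
have M0 : 0 < M by rewrite divr_gt0 // exprn_gt0.
have fl0 : lam_eq_lhs beta (- M) <= c.
  rewrite lhsE; apply: (@le_trans _ _ (\sum_(i < d) k)).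
    apply: ler_sum => i _.
    have [a0 [E _]] := @alf_props R (- M) (beta 0 i) (ltW (gt0_cp M0).1.2) (bp i).
    set a := alf _ _ in a0 E *.
    have bT := le_beta i bp; rewrite -/T in bT.
    have h : a ^+ 2 * M <= T by nra.
    have h2 : a ^+ 2 <= k ^+ 2.
      move: h; rewrite /M mulrA ler_pdivrMr ?exprn_gt0 // => h.
      by rewrite -(ler_pM2l T0) mulrC.
    nra.
  by rewrite sumr_const card_ord -[k *+ d]mulr_natr /k divfK // gt_eqF.
have f0 : lam_eq_lhs beta 0 = T by rewrite lhsE; apply: eq_bigr => i _; rewrite alf0.
have fc : continuous (lam_eq_lhs beta).
  have H := (@sum_cont R d (fun i l => alf l (beta 0 i)) (fun i => @alf_cont R (beta 0 i))).
  move=> x; exact: (H x).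
have [l lin fl] : exists2 l, l \in `[- M, 0] & lam_eq_lhs beta l = c.
  apply: IVT; first by rewrite oppr_le0 ltW.
    exact: continuous_subspaceT.
  rewrite ge_min le_max f0 fl0 /=; by rewrite cT orbT.
exists l; split.
  by split => //; move: lin; rewrite in_itv /= => /andP[].
move=> l' [l'0 fl'].
have l0 : l <= 0 by move: lin; rewrite in_itv /= => /andP[].
case: (ltgtP l l') => // h.
  by have := lhs_lt d0 bp h l'0; rewrite fl fl' ltxx.
by have := lhs_lt d0 bp h l0; rewrite fl fl' ltxx.
Qed.

Lemma qf_sum (R : realType) n (x y : 'rV[R]_n) (A : 'M[R]_n) :
  (x *m A *m y^T) 0 0 = \sum_i \sum_j x 0 i * A i j * y 0 j.
Proof.
rewrite mxE (exchange_big); apply: eq_bigr => j _.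
rewrite !mxE big_distrl /=; done.
Qed.

Lemma posdef_psd (R : realType) n (A : 'M[R]_n) (x : 'rV[R]_n) :
  posdef A -> 0 <= (x *m A *m x^T) 0 0.
Proof.
case=> _ H; have [->|nz] := eqVneq x 0; last exact/ltW/H.
by rewrite !mul0mx mxE.
Qed.

Lemma posdef_unit (R : realType) n (A : 'M[R]_n) : posdef A -> A \in unitmx.
Proof.
move=> [_ H]; rewrite unitmxE unitfE; apply/negP => /det0P [v nz vA].
by move: (H v nz); rewrite vA mul0mx mxE ltxx.
Qed.

Lemma posdef_conj (R : realType) n (A Q : 'M[R]_n) :
  posdef A -> Q^T *m Q = 1%:M -> posdef (Q^T *m A *m Q).
Proof.
move=> [As H] QQ; split.
  by rewrite !trmx_mul trmxK As mulmxA.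
move=> x nz; have -> : x *m (Q^T *m A *m Q) *m x^T = (x *m Q^T) *m A *m (x *m Q^T)^T.
  by rewrite trmx_mul trmxK !mulmxA.
apply: H; apply: contra nz => /eqP xQ; apply/eqP.
by rewrite -[x]mulmx1 -QQ mulmxA xQ mul0mx.
Qed.

Lemma posdef_inv (R : realType) n (A : 'M[R]_n) : posdef A -> posdef (invmx A).
Proof.
move=> PA; have U := posdef_unit PA; case: PA => As H; split.
  by rewrite trmx_inv As.
move=> x nz; have -> : x *m invmx A *m x^T = (x *m invmx A) *m A *m (x *m invmx A)^T.
  by rewrite trmx_mul trmx_inv As mulmxA mulmxKV.
apply: H; apply: contra nz => /eqP xQ; apply/eqP.
by rewrite -[x](mulmxKV U) xQ mul0mx.
Qed.

Lemma qf_delta (R : realType) n (A : 'M[R]_n) (i : 'I_n) :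
  ((delta_mx 0 i : 'rV[R]_n) *m A *m (delta_mx 0 i : 'rV[R]_n)^T) 0 0 = A i i.
Proof. by rewrite trmx_delta -rowE -colE !mxE. Qed.

Lemma posdef_diag_gt0 (R : realType) n (A : 'M[R]_n) (i : 'I_n) : posdef A -> 0 < A i i.
Proof.
case=> _ H; rewrite -qf_delta; apply: H.
apply/negP => /eqP/matrixP/(_ 0 i); rewrite !mxE !eqxx /= => /eqP.
by rewrite oner_eq0.
Qed.
Lemma uu (R : realType) n (i : 'I_n) :
  ((delta_mx 0 i : 'rV[R]_n) *m (delta_mx 0 i : 'rV[R]_n)^T) 0 0 = 1.
Proof. by rewrite -[X in X *m _]mulmx1 qf_delta mxE eqxx. Qed.

Lemma cs_inv (R : realType) n (A : 'M[R]_n) (i : 'I_n) : posdef A ->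
  0 < (invmx A) i i /\ 1 <= A i i * (invmx A) i i.
Proof.
move=> PA; have U := posdef_unit PA; have PK := posdef_inv PA.
set K := invmx A; set u : 'rV[R]_n := delta_mx 0 i.
have Ks : K^T = K by exact: PK.1.
have mpos : 0 < K i i by exact: posdef_diag_gt0.
split => //.
set m := K i i.
set w := u + (- m^-1) *: (u *m K).
have := posdef_psd w PA.
have -> : (w *m A *m w^T) 0 0 = A i i + (- m^-1) + (- m^-1) + m^-1 * m^-1 * m.
  rewrite /w mulmxDl -scalemxAl mulmxKV // linearD /= linearZ /= trmx_mul Ks.
  rewrite !mulmxDr -!scalemxAr !mulmxA !mulmxDl -!scalemxAl (mulmxK U).
  rewrite /u trmx_delta -!rowE -!colE !mxE eqxx /= -/m.
  have m0 : m != 0 by rewrite gt_eqF.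
  by rewrite !mulNr mulVf // subrr mulr0 oppr0 addr0 mulr1 divfK // subrK.
rewrite divfK ?gt_eqF // subrK subr_ge0 => H.
by rewrite -ler_pdivrMr // mul1r.
Qed.

Lemma posdef_sub (R : realType) n (A : 'M[R]_n.+1) :
  posdef A -> posdef (row' 0 (col' 0 A)).
Proof.
move=> [As H]; split.
  apply/matrixP => i j; rewrite !mxE.
  by move/matrixP: As => /(_ (lift 0 j) (lift 0 i)); rewrite !mxE.
move=> x nz.
pose X : 'rV[R]_n.+1 := \row_j (if unlift 0 j is Some k then x 0 k else 0).
have X0 : X 0 0 = 0 by rewrite mxE unlift_none.
have XS k : X 0 (lift 0 k) = x 0 k by rewrite mxE liftK.
have : X != 0.
  apply: contra nz => /eqP XE; apply/eqP/matrixP => i k.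
  by rewrite (ord1 i) -XS XE !mxE.
move/H => P; apply: (lt_le_trans P); rewrite le_eqVlt; apply/orP; left; apply/eqP.
rewrite !qf_sum big_ord_recl X0 big1 ?add0r; last by move=> j _; rewrite !mul0r.
apply/eqP; apply/eqP; apply: eq_bigr => k _.
rewrite big_ord_recl X0 mulr0 add0r; apply: eq_bigr => l _.
by rewrite !XS !mxE.
Qed.

Lemma hadamard (R : realType) n (A : 'M[R]_n) :
  posdef A -> 0 < \det A /\ \det A <= \prod_i A i i.
Proof.
elim: n A => [|n IH] A PA.
  by rewrite det_mx00 big_ord0 ltr01 lexx.
have [IH1 IH2] := IH _ (posdef_sub PA).
have U := posdef_unit PA.
have [Kp CS] := cs_inv 0 PA.
have KE : (invmx A) 0 0 = (\det A)^-1 * \det (row' 0 (col' 0 A)).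
  by rewrite /invmx U !mxE /cofactor addn0 expr0 mul1r.
have dpos : 0 < \det A.
  move: Kp; rewrite KE pmulr_lgt0 // invr_gt0 //.
have A0 : 0 < A 0 0 := posdef_diag_gt0 0 PA.
split => //.
apply: (@le_trans _ _ (\det A * (A 0 0 * (invmx A) 0 0))).
  by rewrite ler_pMr.
rewrite KE mulrCA mulVKf ?gt_eqF // big_ord_recl ler_pM2l //.
by apply: (le_trans IH2); rewrite le_eqVlt; apply/orP; left; apply/eqP; apply: eq_bigr => k _; rewrite !mxE.
Qed.

Lemma inv_uniq (R : realType) n (A B : 'M[R]_n) : A *m B = 1%:M -> invmx A = B.
Proof.
move=> AB; have [UA _] := mulmx1_unit AB.
by rewrite -[invmx A]mulmx1 -AB mulmxA mulVmx // mul1mx.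
Qed.

Lemma tr_conj (R : realType) n (A O : 'M[R]_n) : O *m O^T = 1%:M ->
  \tr (O^T *m A *m O) = \tr A.
Proof. by move=> OO; rewrite mxtrace_mulC mulmxA OO mul1mx. Qed.

Lemma det_conj (R : realType) n (A O : 'M[R]_n) : O^T *m O = 1%:M ->
  \det (O^T *m A *m O) = \det A.
Proof.
move=> OO; have h : \det O * \det O = 1 by rewrite -{1}det_tr -det_mulmx OO det1.
by rewrite !det_mulmx det_tr mulrAC h mul1r.
Qed.

Lemma posdef_diag (R : realType) n (a : 'rV[R]_n) :
  (forall i, 0 < a 0 i) -> posdef (diag_mx a).
Proof.
move=> ap; split; first exact: tr_diag_mx.
move=> x nz; rewrite qf_sum.
have [i xi] : exists i, x 0 i != 0.
  apply/existsP; apply: contraR nz; rewrite negb_exists => /forallP H.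
  apply/eqP/matrixP => r j; rewrite (ord1 r) mxE; exact/eqP/negPn/H.
have E : forall k, \sum_j x 0 k * diag_mx a k j * x 0 j = a 0 k * x 0 k ^+ 2.
  move=> k; rewrite (bigD1 k) //= big1 ?addr0.
    by rewrite mxE eqxx mulr1n; ring.
  by move=> j /negPf jk; rewrite mxE eq_sym jk mulr0n mulr0 mul0r.
under eq_bigr do rewrite E.
rewrite (bigD1 i) //= ltr_pwDl ?sumr_ge0 //.
  by rewrite mulr_gt0 // exprn_even_gt0.
by move=> j _; rewrite mulr_ge0 ?sqr_ge0 // ltW.
Qed.

Lemma ln_prod (R : realType) n (F : 'I_n -> R) : (forall i, 0 < F i) ->
  ln (\prod_i F i) = \sum_i ln (F i).
Proof.
elim: n F => [|n IH] F Fp; first by rewrite big_ord0 big_ord0 ln1.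
rewrite big_ord_recr big_ord_recr /= lnM ?posrE ?IH //.
by rewrite prodr_gt0.
Qed.

Lemma alpha_star_eq (R : realType) (lam b : R) : lam <= 0 -> 0 < b ->
  alpha_star lam b = alf lam b.
Proof.
move=> l0 b0; rewrite /alpha_star; case: eqP => [->|ln0]; first by rewrite alf0.
have lt0 : lam < 0 by rewrite lt_neqAle l0 andbT; apply/eqP.
rewrite /alf; set s := Num.sqrt _.
have h1 : 1 <= 1 - 4 * lam * b by nra.
have s2 : s ^+ 2 = 1 - 4 * lam * b by rewrite sqr_sqrtr //; lra.
have s1 : 0 <= s by exact: sqrtr_ge0.
have D0 : 1 + s != 0 by rewrite gt_eqF //; lra.
have L0 : - 2 * lam != 0 by rewrite mulf_neq0 // ?oppr_eq0 ?pnatr_eq0 //; apply/eqP.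
apply/eqP; rewrite eqr_div //; apply/eqP.
have -> : (s - 1) * (1 + s) = s ^+ 2 - 1 by ring.
rewrite s2; ring.
Qed.

Lemma beta_pos (R : realType) d (B O : 'M[R]_d) (beta : 'rV[R]_d) :
  posdef B -> orthogonal_mx O -> B = O^T *m diag_mx beta *m O ->
  forall i, 0 < beta 0 i.
Proof.
move=> PB [OO1 OO2] BE i.
have := @posdef_conj R d B O^T PB; rewrite trmxK => /(_ OO1) P.
have := posdef_diag_gt0 i P.
have -> : O *m B *m O^T = diag_mx beta.
  by rewrite BE !mulmxA OO1 mul1mx -mulmxA OO1 mulmx1.
by rewrite mxE eqxx mulr1n.
Qed.

Theorem lemma9 (R : realType) (d : nat) (B O : 'M[R]_d) (beta : 'rV[R]_d) (c : R) :
  posdef B ->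
  orthogonal_mx O ->
  B = O^T *m diag_mx beta *m O ->
  0 < c -> c <= \tr B ->
  (exists! lam : R, lam <= 0 /\ lam_eq_lhs beta lam = c) /\
  (forall lam : R, lam <= 0 -> lam_eq_lhs beta lam = c ->
     posdef (Gstar O beta lam) /\ \tr (Gstar O beta lam) = c /\
     forall G : 'M[R]_d, posdef G -> \tr G = c ->
       objective B (Gstar O beta lam) <= objective B G).
Proof.
move=> PB OO BE c0 cT.
have bp := beta_pos PB OO BE.
have [OO1 OO2] := OO.
have trB : \tr B = \sum_i beta 0 i by rewrite BE tr_conj // mxtrace_diag.
split; first by apply: lam_exists => //; rewrite -trB.
move=> lam l0 fl.
set al := \row_i alpha_star lam (beta 0 i).
have alE i : al 0 i = alf lam (beta 0 i) by rewrite mxE alpha_star_eq.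
have alp i : 0 < al 0 i by rewrite alE; have [] := alf_props l0 (bp i).
have alq i : lam * al 0 i ^+ 2 - al 0 i + beta 0 i = 0.
  by rewrite alE; have [_ []] := alf_props l0 (bp i).
have Dp := posdef_diag alp.
have PG : posdef (Gstar O beta lam) by exact: posdef_conj.
have sal : \sum_i al 0 i = c by rewrite -fl lhsE; apply: eq_bigr => i _; rewrite alE.
have trG : \tr (Gstar O beta lam) = c by rewrite /Gstar tr_conj // mxtrace_diag.
split => //; split => //.
move=> G PG' trGc.
set q := \row_i (beta 0 i / al 0 i).
have GX : Gstar O beta lam *m (O^T *m diag_mx q *m O) = B.
  rewrite /Gstar -/al BE !mulmxA -[_ *m O *m O^T]mulmxA OO1 mulmx1.
  congr (_ *m _); rewrite -mulmxA; congr (_ *m _).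
  apply/matrixP => i j; rewrite mul_diag_mx !mxE.
  case: eqP => [->|_]; last by rewrite !mulr0n mulr0.
  have := alp j; rewrite mxE => aj.
  by rewrite !mulr1n mulrC divfK // gt_eqF.
have UG := posdef_unit PG.
have objS : objective B (Gstar O beta lam) =
    \sum_i (beta 0 i / al 0 i + ln (al 0 i)).
  rewrite /objective -GX mulKmx // tr_conj // mxtrace_diag /Gstar det_conj //.
  rewrite det_diag ln_prod // big_split /=; congr (_ + _).
  by apply: eq_bigr => i _; rewrite mxE.
set G' := O *m G *m O^T.
have PG2 : posdef G'.
  by have := @posdef_conj R d G O^T PG'; rewrite trmxK => /(_ OO1).
set K := invmx G'.
have PK := posdef_inv PG2.
have UG' := posdef_unit PG'.
have KE : K = O *m invmx G *m O^T.
  apply: inv_uniq; rewrite /G' !mulmxA -[_ *m O^T *m O]mulmxA OO2 mulmx1.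
  by rewrite -[_ *m G *m invmx G]mulmxA mulmxV // mulmx1 OO1.
have trK : \tr (invmx G *m B) = \sum_i K i i * beta 0 i.
  rewrite BE !mulmxA mxtrace_mulC !mulmxA -KE mul_mx_diag /mxtrace.
  by apply: eq_bigr => i _; rewrite mxE.
have [dK1 dK2] := hadamard PK.
have detG : \det G = (\det K)^-1.
  rewrite /K det_inv invrK /G'.
  by have := @det_conj R d G O^T; rewrite trmxK => /(_ OO1) ->.
have lnG : - \sum_i ln (K i i) <= ln (\det G).
  rewrite detG lnV ?posrE // lerN2 -ln_prod; last by move=> i; exact: posdef_diag_gt0.
  by rewrite ler_ln ?posrE // prodr_gt0 // => i _; exact: posdef_diag_gt0.
have trG' : \tr G' = c.
  by rewrite -trGc /G'; have := @tr_conj R d G O^T; rewrite trmxK => /(_ OO2).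
set a := fun i => (K i i)^-1.
have ap i : 0 < a i by rewrite /a invr_gt0; exact: posdef_diag_gt0.
have sa : \sum_i a i <= c.
  rewrite -trG' /mxtrace; apply: ler_sum => i _.
  have [Kp CS] := cs_inv i PG2.
  by rewrite /a -/K -(ler_pM2r Kp) mulVf // gt_eqF.
have objG : \sum_i (beta 0 i / a i + ln (a i)) <= objective B G.
  rewrite /objective trK big_split /=; apply: lerD.
    by apply: ler_sum => i _; rewrite /a invrK mulrC.
  apply: le_trans lnG; rewrite -sumrN; apply: ler_sum => i _.
  by rewrite /a lnV // posrE; exact: posdef_diag_gt0.
rewrite objS; apply: le_trans objG.
have H : \sum_i (beta 0 i / al 0 i + ln (al 0 i) - lam * al 0 i) <=
         \sum_i (beta 0 i / a i + ln (a i) - lam * a i).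
  by apply: ler_sum => i _; apply: scalar_min.
rewrite !sumrB -!mulr_sumr sal in H.
have : lam * c <= lam * \sum_i a i by rewrite ler_wnM2l.
lra.
Qed.
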